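(* Let $d,\ell,s,m\in\mathbb{N}$ with $d\ge\ell$, let $T\subseteq\mathbb{F}$ be a subset of size $n$, and let $r=s-\lfloor\frac{d-\ell}{n}\rfloor$. Let $Q,R\in\mathbb{F}[x]$ be univariate polynomials of degree at most $\ell$, and let $h\colon T\to\mathbb{F}_{<r}[z]$ and $w\colon T\times[r]\to\mathbb{Z}_{\ge0}$ be functions such that $w(a,i)\le\frac{n^{m-1}}{2}\big((s-i)-\frac{d-\ell}{n}\big)$ for every $(a,i)\in T\times[r]$. If $Q\ne R$, then \[\Gamma^{s,d,\ell}_w(h,Q)+\Gamma^{s,d,\ell}_w(h,R)\ge n^m\Big(s-\frac dn\Big).\]
   Context: $\mathbb{F}$ is a field and $[r]=\{0,\dots,r-1\}$. For $i\in[r+1]$, $A_i(h,R)=\{a\in T:\max\{j\in[r+1]:h(a)\equiv R(a+z)\bmod\langle z\rangle^j\}=i\}$, and \[\Gamma^{s,d,\ell}_w(h,R)=\sum_{i=0}^{r-1}\sum_{a\in A_i(h,R)}\max\Big\{n^{m-1}\Big((s-i)-\tfrac{d-\ell}{n}\Big)-w(a,i),\max_{j<i}w(a,j)\Big\}+\sum_{a\in A_r(h,R)}\max_{j<r}w(a,j)\] (maxima over empty sets ignored). *)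

(* Defs.v *)
From mathcomp Require Import all_boot all_order all_algebra.
Set Implicit Arguments. Unset Strict Implicit. Unset Printing Implicit Defensive.
Import Order.TTheory GRing.Theory Num.Theory.
Local Open Scope ring_scope.

Section Gamma.
Variable F : fieldType.

Definition shiftp (R : {poly F}) (a : F) : {poly F} := R \Po ('X + a%:P).

(* max { j in [r+1] : h(a) = R(a+z) mod z^j }  (j = 0 always qualifies) *)
Definition agree (r : nat) (h : F -> {poly F}) (R : {poly F}) (a : F) : nat :=
  \max_(j < r.+1 | 'X^j %| (h a - shiftp R a)) j.

Definition gterm (n s d l m : nat) (w : F -> nat -> nat) (a : F) (i : nat) : rat :=
  (n%:Q) ^ (m%:Z - 1) * ((s%:Q - i%:Q) - (d%:Q - l%:Q) / n%:Q) - (w a i)%:Q.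

(* Gamma^{s,d,l}_w(h,R) with T given as a duplicate-free list, n = size T;
   maxima over empty sets are ignored. *)
Definition Gamma (T : seq F) (r s d l m : nat) (w : F -> nat -> nat)
    (h : F -> {poly F}) (R : {poly F}) : rat :=
  \sum_(i < r) \sum_(a <- T | agree r h R a == i)
      (if (i == 0 :> nat) then gterm (size T) s d l m w a i
       else Num.max (gterm (size T) s d l m w a i) (\max_(j < i) w a j)%:Q)
  + \sum_(a <- T | agree r h R a == r)
      (if r == 0%N then 0 else (\max_(j < r) w a j)%:Q).
End Gamma.

(* Main.v *)
Require Import Defs.
From mathcomp Require Import all_boot all_order all_algebra.
From mathcomp Require Import ring lra.
Import Order.TTheory GRing.Theory Num.Theory.
Local Open Scope ring_scope.

Lemma shift_dvd (F : fieldType) (p : {poly F}) (a : F) k :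
  'X^k %| shiftp p a -> ('X - a%:P) ^+ k %| p.
Proof.
case/dvdpP => q Hq.
rewrite -(comp_polyXaddC_K p a) -/(shiftp p a) Hq comp_polyM comp_Xn_poly.
exact: dvdp_mull.
Qed.

Lemma sum_mult_le (F : fieldType) (T : seq F) (k : F -> nat) (p : {poly F}) :
  uniq T -> p != 0 -> (forall a, a \in T -> ('X - a%:P) ^+ k a %| p) ->
  (\sum_(a <- T) k a <= (size p).-1)%N.
Proof.
elim: T p => [|a T IH] p /=; first by rewrite big_nil.
case/andP=> aT uT pn0 Hd.
have /dvdpP [q Hq] := Hd a (mem_head _ _).
have qn0 : q != 0 by apply: contraNneq pn0 => q0; rewrite Hq q0 mul0r.
have Xn0 : ('X - a%:P) ^+ k a != 0 by rewrite expf_neq0 ?polyXsubC_eq0.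
rewrite big_cons.
have -> : (size p).-1 = (k a + (size q).-1)%N.
  rewrite Hq size_mul // size_exp_XsubC.
  have : (0 < size q)%N by rewrite size_poly_gt0.
  case: (size q) => //= n _; by rewrite addnS /= addnC.
rewrite leq_add2l; apply: IH => // b bT.
have := Hd b (mem_behead (s:=a::T) bT) ; rewrite Hq Gauss_dvdpl //.
apply: coprimep_expl; apply: coprimep_expr.
rewrite coprimep_XsubC root_XsubC.
by apply: contraNneq aT => ->.
Qed.

Lemma agree_le (F : fieldType) r (h : F -> {poly F}) R a : (agree r h R a <= r)%N.
Proof. by apply/bigop.bigmax_leqP => i _; rewrite -ltnS. Qed.

Lemma agree_dvd (F : fieldType) r (h : F -> {poly F}) R a :
  'X^(agree r h R a) %| (h a - shiftp R a).
Proof.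
rewrite /agree (bigop.bigmax_eq_arg ord0) ?expr0 ?dvd1p //.
by case: arg_maxnP; rewrite ?expr0 ?dvd1p.
Qed.

Arguments agree_le [F].
Arguments agree_dvd [F].

Lemma sum_const_seq (T : eqType) (s : seq T) (x : rat) :
  \sum_(a <- s) x = x * (size s)%:R.
Proof.
elim: s => [|a s IH]; first by rewrite big_nil mulr0.
by rewrite big_cons IH /= -addn1 natrD; ring.
Qed.

Lemma pt (iQ iR r : nat) (GQ GR : rat) (c wv : nat -> rat) :
  (iQ <= r)%N -> (iR <= r)%N ->
  (forall i, (i < r)%N -> 2 * wv i <= c i) -> c r <= 0 ->
  ((iQ < r)%N -> c iQ - wv iQ <= GQ) -> (forall j, (j < iQ)%N -> wv j <= GQ) ->
  (iQ = r -> 0 <= GQ) ->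
  ((iR < r)%N -> c iR - wv iR <= GR) -> (forall j, (j < iR)%N -> wv j <= GR) ->
  (iR = r -> 0 <= GR) ->
  c (minn iQ iR) <= GQ + GR.
Proof.
move=> hQ hR hw hcr a1 b1 c1 a2 b2 c2.
case: (ltngtP iQ iR) => h.
  have hq : (iQ < r)%N by apply: leq_trans h hR.
  have := a1 hq; have := b2 _ h; have := hw _ hq; lra.
  have hq : (iR < r)%N by apply: leq_trans h hQ.
  have := a2 hq; have := b1 _ h; have := hw _ hq; lra.
- subst iR.
  case: (ltnP iQ r) => hq.
  + have := a1 hq; have := a2 hq; have := hw _ hq; lra.
  + have e : iQ = r by apply/eqP; rewrite eqn_leq hQ hq.
    have := c1 e; have := c2 e; rewrite e; lra.
Qed.

Definition Gc (F : fieldType) (T : seq F) (r s d l m : nat) (w : F -> nat -> nat)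
    (h : F -> {poly F}) (R : {poly F}) (a : F) : rat :=
  let i := agree r h R a in
  if (i < r)%N then
    (if (i == 0 :> nat) then gterm (size T) s d l m w a i
     else Num.max (gterm (size T) s d l m w a i) (\max_(j < i) w a j)%:Q)
  else (if r == 0%N then 0 else (\max_(j < r) w a j)%:Q).
Arguments Gc [F].

Lemma Gamma_sum (F : fieldType) (T : seq F) (r s d l m : nat) (w : F -> nat -> nat) (h : F -> {poly F}) (R : {poly F}) :
  Gamma T r s d l m w h R = \sum_(a <- T) Gc T r s d l m w h R a.
Proof.
rewrite /Gamma.
under eq_bigr => i _ do rewrite big_mkcond.
rewrite exchange_big /= [X in _ + X]big_mkcond -big_split /=.
apply: eq_bigr => a _; rewrite /Gc /=.
have := agree_le r h R a.
case: ltnP => [hi _|hi hle].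
- rewrite (bigD1 (Ordinal hi)) //= eqxx (ltn_eqF hi) addr0 [X in _ + X]big1 ?addr0 //.
  move=> j hj; case: eqP => // e; exfalso; move/eqP: hj; apply.
  by apply: val_inj; rewrite /= e.
- have e : agree r h R a = r by apply/eqP; rewrite eqn_leq hle hi.
  rewrite e eqxx big1 ?add0r // => j _.
  by rewrite eq_sym (ltn_eqF (ltn_ord j)).
Qed.

Lemma GcA (F : fieldType) (T : seq F) (r s d l m : nat) (w : F -> nat -> nat) (h : F -> {poly F}) (R : {poly F}) (a : F) :
  (agree r h R a < r)%N ->
  gterm (size T) s d l m w a (agree r h R a) <= Gc T r s d l m w h R a.
Proof.
move=> hi; rewrite /Gc /= hi.
by case: eqP => _; rewrite ?lexx ?le_max ?lexx.
Qed.

Lemma GcB (F : fieldType) (T : seq F) (r s d l m : nat) (w : F -> nat -> nat) (h : F -> {poly F}) (R : {poly F}) (a : F) j :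
  (j < agree r h R a)%N -> (w a j)%:Q <= Gc T r s d l m w h R a.
Proof.
move=> hj; have hle := agree_le r h R a.
have le1 : forall k, (j < k)%N -> (w a j)%:Q <= (\max_(j0 < k) w a j0)%:Q.
  move=> k hk; rewrite ler_nat.
  exact: (bigop.leq_bigmax (Ordinal hk)).
rewrite /Gc /=; case: ltnP => hi.
- rewrite (gtn_eqF (leq_ltn_trans (leq0n j) hj)).
  by rewrite le_max le1 ?orbT.
- rewrite (gtn_eqF (leq_ltn_trans (leq0n j) (leq_trans hj hle))).
  by apply: le1; apply: leq_trans hj hle.
Qed.

Lemma GcC (F : fieldType) (T : seq F) (r s d l m : nat) (w : F -> nat -> nat) (h : F -> {poly F}) (R : {poly F}) (a : F) :
  agree r h R a = r -> 0 <= Gc T r s d l m w h R a.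
Proof.
move=> e; rewrite /Gc /= e ltnn.
by case: eqP => _; rewrite ?lexx ?ler0n.
Qed.

Theorem lemma8p3 (F : fieldType) (d l s m : nat) (T : seq F)
    (Q R : {poly F}) (h : F -> {poly F}) (w : F -> nat -> nat) :
  (l <= d)%N -> uniq T -> (0 < size T)%N -> ((d - l) %/ size T <= s)%N ->
  let n := size T in
  let r := (s - (d - l) %/ n)%N in
  (size Q <= l.+1)%N -> (size R <= l.+1)%N ->
  (forall a, a \in T -> (size (h a) <= r)%N) ->
  (forall a i, a \in T -> (i < r)%N ->
     (w a i)%:Q <= (n%:Q) ^ (m%:Z - 1) / 2 * ((s%:Q - i%:Q) - (d%:Q - l%:Q) / n%:Q)) ->
  Q != R ->
  Gamma T r s d l m w h Q + Gamma T r s d l m w h R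
    >= (n%:Q) ^+ m * (s%:Q - d%:Q / n%:Q).
Proof.
move=> ld uT n0 hs n r hQ hR hh hw QR.
set A := (n%:Q) ^ (m%:Z - 1).
pose c := fun i : nat => A * ((s%:Q - i%:Q) - (d%:Q - l%:Q) / n%:Q).
pose k := fun a => minn (agree r h Q a) (agree r h R a).
have nQ0 : 0 < n%:Q by rewrite ltr0n.
have A0 : 0 <= A by apply: exprz_ge0; apply: ltW.
have hk : (\sum_(a <- T) k a <= l)%N.
  have QR0 : Q - R != 0 by rewrite subr_eq0.
  apply: leq_trans (@sum_mult_le F T k (Q - R) uT QR0 _) _.
    move=> a _; apply: (@shift_dvd F).
    rewrite /shiftp comp_polyB -/(shiftp Q a) -/(shiftp R a).
    have -> : shiftp Q a - shiftp R a = (h a - shiftp R a) - (h a - shiftp Q a).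
      by ring.
    apply: dvdp_sub; apply: dvdp_trans (agree_dvd _ _ _ _); apply: dvdp_exp2l.
      exact: geq_minr.
    exact: geq_minl.
  have : (size (Q - R)%R <= l.+1)%N.
    apply: leq_trans (size_polyD _ _) _; rewrite size_polyN geq_max hQ hR //.
  by case: (size (Q - R)%R).
rewrite !Gamma_sum -big_split /=.
apply: le_trans (_ : _ <= \sum_(a <- T) c (k a)) _; last first.
  rewrite big_seq [X in _ <= X]big_seq; apply: ler_sum => a aT.
  apply: (@pt _ _ r _ _ c (fun j => (w a j)%:Q)).
  - exact: agree_le.
  - exact: agree_le.
  - move=> i hi; have := hw a i aT hi; rewrite -/A mulrAC /c; lra.
  - rewrite /c; apply: mulr_ge0_le0 => //.
    rewrite subr_le0 -!pmulrn -natrB ?leq_subr // subKn // -natrB //.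
    rewrite ler_pdivlMr // -natrM ler_nat; exact: leq_divM.
  - exact: GcA.
  - move=> j; exact: GcB.
  - exact: GcC.
  - exact: GcA.
  - move=> j; exact: GcB.
  - exact: GcC.
have eA : n%:Q ^+ m = A * n%:Q.
  rewrite /A -[X in _ = _ * X](expr1z) -expfzDr ?subrK //.
  by rewrite lt0r_neq0.
rewrite (eq_bigr (fun a => A * (s%:Q - (d%:Q - l%:Q) / n%:Q) - A * (k a)%:Q)); last first.
  by move=> a _; rewrite /c; ring.
rewrite sumrB sum_const_seq -/n -mulr_sumr -!pmulrn -natr_sum eA.
have hK : (\sum_(a <- T) k a)%:R <= l%:R :> rat by rewrite ler_nat.
move: hK; set K := (\sum_(a <- T) k a)%:R => hK.
have nn0 : n%:R != 0 :> rat by rewrite pnatr_eq0 -lt0n.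
rewrite -subr_ge0.
have -> : A * (s%:R - (d%:R - l%:R) / n%:R) * n%:R - A * K - A * n%:R * (s%:R - d%:R / n%:R)
   = A * (l%:R - K) by field.
by apply: mulr_ge0 => //; rewrite subr_ge0.
Qed.
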